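(* Let $a,d\in\mathbb{C}\setminus\{0\}$ and $b=0$. Then there exists $\varepsilon>0$ (depending on $a$ and $d$) such that for every $f\in\mathbb{C}$ with $|f|<\varepsilon$, the node-wise equi-M sets of the system $z_1(n+1)=(az_1(n))^2+c$, $z_2(n+1)=(dz_1(n)+fz_2(n))^2+c$ coincide: $\mathcal{M}(z_1)=\mathcal{M}(z_2)$.
   Context: For $c\in\mathbb{C}$, the 2D coupled quadratic system with connectivity matrix $A=\begin{pmatrix}a&b\\ d&f\end{pmatrix}$ is the iteration $z_1(n+1)=(az_1(n)+bz_2(n))^2+c$, $z_2(n+1)=(dz_1(n)+fz_2(n))^2+c$. The critical orbit is the orbit with $z_1(0)=z_2(0)=0$. The node-wise equi-M set $\mathcal{M}(z_k)$ ($k=1,2$) is the set of $c\in\mathbb{C}$ for which the sequence $(z_k(n))_{n\ge0}$ of the critical orbit is bounded. *)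

(* Defs.v *)
From Stdlib Require Import Reals.
From Coquelicot Require Export Coquelicot.
Open Scope C_scope.

Fixpoint crit_orbit (a b d f c : C) (n : nat) : C * C :=
  match n with
  | O => (RtoC 0%R, RtoC 0%R)
  | S m =>
      let z := crit_orbit a b d f c m in
      let u := a * fst z + b * snd z in
      let v := d * fst z + f * snd z in
      (u * u + c, v * v + c)
  end.

Definition equiM1 (a b d f : C) : C -> Prop :=
  fun c => exists B : R, forall n : nat, (Cmod (fst (crit_orbit a b d f c n)) <= B)%R.

Definition equiM2 (a b d f : C) : C -> Prop :=
  fun c => exists B : R, forall n : nat, (Cmod (snd (crit_orbit a b d f c n)) <= B)%R.

(* Main.v *)
Require Import Defs.
From Stdlib Require Import Reals Lra Psatz.
From Coquelicot Require Import Coquelicot.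
Open Scope C_scope.

Lemma unb_nat (B dl : R) : (0 < dl)%R -> exists m : nat, (B < INR m * dl)%R.
Proof.
  intros Hd.
  assert (H0 : (0 <= Rabs B / dl)%R).
  { apply Rdiv_le_0_compat; [apply Rabs_pos|lra]. }
  destruct (nfloor_ex _ H0) as [n [_ Hn]].
  exists (S n). rewrite S_INR.
  assert (Rabs B < (INR n + 1) * dl)%R.
  { apply (Rmult_lt_compat_r dl) in Hn; [|lra].
    unfold Rdiv in Hn. rewrite Rmult_assoc, Rinv_l in Hn; lra. }
  pose proof (Rle_abs B). lra.
Qed.

Lemma escape (s : nat -> R) (al g t : R) (k : nat) :
  (0 < al)%R -> (forall n, 0 <= s n)%R ->
  (forall n, al * s n * s n - g <= s (S n))%R ->
  (2 / al < t)%R -> (g <= t)%R -> (t <= s k)%R ->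
  forall B, exists n, (B < s n)%R.
Proof.
  intros Hal Hs Hrec Ht Hg Hk.
  assert (Hat : (2 < al * t)%R).
  { apply (Rmult_lt_compat_l al) in Ht; [|lra].
    unfold Rdiv in Ht. rewrite <- Rmult_assoc, (Rmult_comm al 2), Rmult_assoc, Rinv_r in Ht; lra. }
  assert (Ht0 : (0 < t)%R) by nra.
  set (dl := (t * (al * t - 2))%R).
  assert (Hdl : (0 < dl)%R) by (unfold dl; nra).
  assert (Hm : forall m, (t + INR m * dl <= s (k + m)%nat)%R).
  { induction m.
    - rewrite Nat.add_0_r. simpl. lra.
    - rewrite Nat.add_succ_r, S_INR. specialize (Hrec (k + m)%nat).
      set (x := s (k + m)%nat) in *.
      assert (t <= x)%R by (pose proof (pos_INR m); nra).
      assert (al * x * x - g >= x + dl)%R.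
      { unfold dl. assert (al * x - 2 >= al * t - 2)%R by nra. nra. }
      nra. }
  intros B. destruct (unb_nat B dl Hdl) as [m Hm'].
  exists (k + m)%nat. specialize (Hm m). lra.
Qed.

Lemma step (a b d f c : C) (n : nat) :
  crit_orbit a b d f c (S n) =
  let z := crit_orbit a b d f c n in
  ((a * fst z + b * snd z) * (a * fst z + b * snd z) + c,
   (d * fst z + f * snd z) * (d * fst z + f * snd z) + c).
Proof. reflexivity. Qed.

Lemma rev_tri (x c : C) : (Cmod x - Cmod c <= Cmod (x + c))%R.
Proof.
  assert (x = (x + c) + - c) by ring.
  pose proof (Cmod_triangle (x + c) (- c)). rewrite Cmod_opp in H0.
  rewrite <- H in H0. lra.
Qed.

Lemma M1_bound (a d f c : C) (ha : a <> 0) :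
  equiM1 a 0 d f c ->
  (Cmod c <= 2 / (Cmod a * Cmod a))%R /\
  forall n, (Cmod (fst (crit_orbit a 0 d f c n)) <= 2 / (Cmod a * Cmod a))%R.
Proof.
  intros [B HB].
  set (s := fun n => Cmod (fst (crit_orbit a 0 d f c n))).
  set (al := (Cmod a * Cmod a)%R).
  assert (Hal : (0 < al)%R) by (apply Cmod_gt_0 in ha; unfold al; nra).
  assert (Hrec : forall n, (al * s n * s n - Cmod c <= s (S n))%R).
  { intro n. unfold s. rewrite step. simpl fst.
    rewrite Cmult_0_l, Cplus_0_r.
    eapply Rle_trans; [|apply rev_tri].
    rewrite !Cmod_mult. unfold al. lra. }
  assert (Hs1 : s 1%nat = Cmod c).
  { unfold s. simpl. f_equal. ring. }
  assert (Hc : (Cmod c <= 2 / al)%R).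
  { destruct (Rle_or_lt (Cmod c) (2/al)) as [H|H]; auto.
    exfalso. destruct (escape s al (Cmod c) (Cmod c) 1 Hal (fun n => Cmod_ge_0 _) Hrec H
       (Rle_refl _) (Req_le _ _ (eq_sym Hs1)) B) as [n Hn].
    specialize (HB n). unfold s in Hn. lra. }
  split; auto.
  intro n. destruct (Rle_or_lt (s n) (2/al)) as [H|H]; auto.
  exfalso. destruct (escape s al (Cmod c) (s n) n Hal (fun n => Cmod_ge_0 _) Hrec H
       ltac:(lra) (Rle_refl _) B) as [m Hm].
  specialize (HB m). unfold s in Hm. lra.
Qed.

Theorem mainTheorem11 (a d : C) (ha : a <> 0) (hd : d <> 0) :
  exists eps : R, (0 < eps)%R /\
    forall f : C, (Cmod f < eps)%R ->
      forall c : C, equiM1 a 0 d f c <-> equiM2 a 0 d f c.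
Proof.
  set (K := (2 / (Cmod a * Cmod a))%R).
  assert (HK : (0 <= K)%R).
  { unfold K. apply Rdiv_le_0_compat; [lra|]. apply Cmod_gt_0 in ha. nra. }
  pose proof (Cmod_ge_0 d) as Hd0.
  set (R0 := ((Cmod d * K + 1) * (Cmod d * K + 1) + K + 1)%R).
  assert (HR0 : (1 <= R0)%R) by (unfold R0; nra).
  exists (/ R0)%R. split; [apply Rinv_0_lt_compat; lra|].
  intros f Hf c. split.
  - intros H1. destruct (M1_bound a d f c ha H1) as [Hc Hu].
    fold K in Hc, Hu.
    exists R0. intro n. induction n.
    + simpl. rewrite Cmod_0. lra.
    + rewrite step. simpl snd.
      set (u := fst (crit_orbit a 0 d f c n)) in *.
      set (y := snd (crit_orbit a 0 d f c n)) in *.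
      specialize (Hu n). fold u in Hu.
      assert (Hfy : (Cmod f * Cmod y <= 1)%R).
      { pose proof (Cmod_ge_0 f). pose proof (Cmod_ge_0 y).
        apply Rle_trans with (/R0 * R0)%R; [|rewrite Rinv_l; lra].
        apply Rmult_le_compat; lra. }
      assert (Hv : (Cmod (d * u + f * y) <= Cmod d * K + 1)%R).
      { eapply Rle_trans; [apply Cmod_triangle|]. rewrite !Cmod_mult.
        pose proof (Cmod_ge_0 u). nra. }
      eapply Rle_trans; [apply Cmod_triangle|]. rewrite Cmod_mult.
      pose proof (Cmod_ge_0 (d * u + f * y)).
      unfold R0.
      assert (Cmod (d * u + f * y) * Cmod (d * u + f * y) <= (Cmod d * K + 1) * (Cmod d * K + 1))%R
        by (apply Rmult_le_compat; lra).
      lra.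
  - intros [M HM]. exists ((1 + M + M + Cmod f * M) / Cmod d)%R.
    intro n.
    pose proof (HM (S n)) as H. rewrite step in H. simpl snd in H.
    set (u := fst (crit_orbit a 0 d f c n)) in *.
    set (y := snd (crit_orbit a 0 d f c n)) in *.
    assert (Hc : (Cmod c <= M)%R).
    { specialize (HM 1%nat). simpl in HM.
      replace ((d * 0 + f * 0) * (d * 0 + f * 0) + c) with c in HM by ring. exact HM. }
    set (v := d * u + f * y) in *.
    assert (Hv2 : (Cmod v * Cmod v <= M + Cmod c)%R).
    { rewrite <- Cmod_mult. pose proof (rev_tri (v * v) c). lra. }
    assert (Hv : (Cmod v <= 1 + M + M)%R).
    { pose proof (Cmod_ge_0 v). nra. }
    assert (Hdu : (Cmod d * Cmod u <= 1 + M + M + Cmod f * M)%R).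
    { rewrite <- Cmod_mult.
      replace (d * u) with (v + - (f * y)) by (unfold v; ring).
      eapply Rle_trans; [apply Cmod_triangle|]. rewrite Cmod_opp, Cmod_mult.
      pose proof (HM n). fold y in H0. pose proof (Cmod_ge_0 f).
      assert (Cmod f * Cmod y <= Cmod f * M)%R by (apply Rmult_le_compat_l; lra).
      lra. }
    apply Cmod_gt_0 in hd.
    apply (Rmult_le_reg_l (Cmod d)); auto.
    unfold Rdiv. rewrite (Rmult_comm _ (/ Cmod d)), <- Rmult_assoc, Rinv_r; lra.
Qed.
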